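(* In the setting described in the context, assume A1$'$, A2 and A3. Suppose there exist a fixed subset $\mathcal K^*\subseteq\{1,\dots,K\}$ and a constant $\delta>0$ such that $\inf_{\mathbf w\in\mathcal W^*}\sum_{k\in\mathcal K^*}w_k\ge\frac12+\delta$ and $$\limsup_{n\to\infty}\Pr\Big(\bigcup_{k\in\mathcal K^*}\{Y\notin\mathcal C_k(\mathbf X;\mathcal D_n)\}\Big)\le\alpha.$$ Then $\liminf_{n\to\infty}\Pr\big(Y\in\mathcal C_{\mathrm{comb}}(\mathbf X;\mathcal D_n)\big)\ge1-\alpha$.
   Context: Setting: fix $K\ge2$ and $\alpha\in(0,1)$. For each sample size $n$, on a common probability space there are a random data set $\mathcal D_n$ and a random test pair $(\mathbf X,Y)$ with $\mathbf X\in\mathcal X\subseteq\mathbb R^p$, $Y\in\mathbb R$. For each $k\in\{1,\dots,K\}$ there is a random prediction set $\mathcal C_k(\mathbf X;\mathcal D_n)\subseteq\mathbb R$, determined by $\mathcal D_n$ and $\mathbf X$, such that the events $\{Y\in\mathcal C_k(\mathbf X;\mathcal D_n)\}$ are measurable. Let $\Delta^{K-1}=\{\mathbf w\in[0,1]^K:w_k\ge0,\sum_k w_k=1\}$ and let $\widehat{\mathbf w}_n=(\widehat w_{n,1},\dots,\widehat w_{n,K})$ be a $\sigma(\mathcal D_n)$-measurable random vector in $\Delta^{K-1}$. Let $\mathcal W^*\subseteq\Delta^{K-1}$ be a nonempty closed convex set; $\|\cdot\|$ is the Euclidean norm. A1$'$: $\sup_{k\in\{1,\dots,K\}}\big|\Pr(Y\notin\mathcal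 C_k(\mathbf X;\mathcal D_n)\mid\mathcal D_n)-\alpha\big|\to0$ in probability as $n\to\infty$. A2: $\inf_{\mathbf w\in\mathcal W^*}\|\widehat{\mathbf w}_n-\mathbf w\|\to0$ in probability as $n\to\infty$. A3: $\mathcal C_{\mathrm{comb}}(\mathbf X;\mathcal D_n):=\{y\in\mathbb R:\sum_{k=1}^K\widehat w_{n,k}\mathbf 1\{y\in\mathcal C_k(\mathbf X;\mathcal D_n)\}>1/2\}$. *)

(* Defs.v *)
From HB Require Import structures.
From mathcomp Require Import all_boot all_order all_algebra.
From mathcomp Require Import all_classical all_reals all_analysis.
Set Implicit Arguments. Unset Strict Implicit. Unset Printing Implicit Defensive.
Import Order.TTheory GRing.Theory Num.Theory.
Import numFieldNormedType.Exports.
Local Open Scope classical_set_scope.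
Local Open Scope ring_scope.

(* Euclidean norm on R^K (row vectors); note MathComp's default norm on
   matrices is the max norm, so we define the Euclidean one explicitly. *)
Definition eucl_norm (R : realType) (K : nat) (v : 'rV[R]_K) : R :=
  Num.sqrt (\sum_(k < K) v ord0 k ^+ 2).

Definition simplex (R : realType) (K : nat) : set 'rV[R]_K :=
  [set w | (forall k, 0 <= w ord0 k) /\ \sum_(k < K) w ord0 k = 1].

Definition convex_rV (R : realType) (K : nat) (W : set 'rV[R]_K) : Prop :=
  forall u v (t : R), W u -> W v -> 0 <= t -> t <= 1 ->
    W (t *: u + (1 - t) *: v).

Definition dist_set (R : realType) (K : nat) (W : set 'rV[R]_K) (v : 'rV[R]_K) : R :=
  inf [set eucl_norm (v - w) | w in W].

Definition cvg_prob0 (d : measure_display) (Omega : measurableType d)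
  (R : realType) (P : probability Omega R) (Z : nat -> Omega -> R) : Prop :=
  forall eps : R, 0 < eps ->
    (fun n => P [set w | eps <= `|Z n w|]) @ \oo --> 0%E.

(* g \o Dn is a version of the conditional probability P(E | sigma(Dn)):
   g is a measurable function of the data (hence g \o Dn is sigma(Dn)-measurable),
   g \o Dn is integrable, and for every sigma(Dn)-measurable set Dn^-1(B),
   int_{Dn^-1 B} g(Dn) dP = P(Dn^-1 B  inter  E). *)
Definition cond_prob_version (d : measure_display) (Omega : measurableType d)
  (R : realType) (P : probability Omega R)
  (dD : measure_display) (TD : measurableType dD) (Dn : Omega -> TD)
  (E : set Omega) (g : TD -> R) : Prop :=
  [/\ measurable_fun setT g,
      P.-integrable setT (fun w => (g (Dn w))%:E) &
      forall B : set TD, measurable B ->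
        (\int[P]_(w in Dn @^-1` B) (g (Dn w))%:E = P (Dn @^-1` B `&` E))%E].

Definition C_comb (R : realType) (K : nat) (w : 'rV[R]_K)
  (C : 'I_K -> set R) : set R :=
  [set y | 1 / 2 < \sum_(k < K) w ord0 k * \1_(C k) y].

(* Main.v *)
Require Import Defs.
From HB Require Import structures.
From mathcomp Require Import all_boot all_order all_algebra.
From mathcomp Require Import all_classical all_reals all_analysis.
From mathcomp Require Import ring lra measurable_realfun.
Import Order.TTheory GRing.Theory Num.Theory.
Import numFieldNormedType.Exports.
Local Open Scope classical_set_scope.
Local Open Scope ring_scope.

Section RealAux.
Context {R : realType}.

Lemma term_bound (a b c r : R) : 0 <= a <= 1 -> 0 <= b <= 1 -> 0 <= c <= 1 ->
  `|a - b| <= r -> (b - c) ^+ 2 <= (a - c) ^+ 2 + 2 * r.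
Proof.
move=> /andP[a0 a1] /andP[b0 b1] /andP[c0 c1] /ler_normlP [h1 h2].
nra.
Qed.

Lemma sum_bound K (a b u : 'I_K -> R) (r : R) :
  (forall k, 0 <= a k <= 1) -> (forall k, 0 <= b k <= 1) ->
  (forall k, 0 <= u k <= 1) -> (forall k, `|a k - b k| <= r) ->
  \sum_(k < K) (b k - u k) ^+ 2 <= \sum_(k < K) (a k - u k) ^+ 2 + (2 * r) *+ K.
Proof.
move=> ha hb hu hr.
have -> : (2 * r) *+ K = \sum_(k < K) (2 * r) by rewrite sumr_const card_ord.
rewrite -big_split /=; apply: ler_sum => k _; exact: term_bound.
Qed.

Lemma le_from_nat (a b c : R) : 0 <= c ->
  (forall m : nat, a <= b + c / m.+1%:R) -> a <= b.
Proof.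
move=> c0 h; apply/ler_addgt0Pr => e e0.
have := h (Num.truncn (c / e)); move/le_trans; apply.
rewrite lerD2l ler_pdivrMr ?ltr0Sn //.
have := truncnS_gt (c / e); rewrite ltr_pdivrMr // => /ltW.
by rewrite mulrC.
Qed.

Lemma grid_pt (x : R) (m : nat) : 0 <= x <= 1 ->
  exists j : 'I_(m.+2), let q := (j : nat)%:R / m.+1%:R in
    [/\ 0 <= q <= 1 & `|x - q| <= m.+1%:R^-1].
Proof.
move=> /andP[x0 x1].
have xm0 : 0 <= x * m.+1%:R by rewrite mulr_ge0.
have /andP[t1 t2] := truncn_itv xm0.
set t := Num.truncn _ in t1 t2.
have tm : (t < m.+2)%N.
  rewrite -(ltr_nat R); apply: (le_lt_trans t1).
  rewrite (@le_lt_trans _ _ (m.+1%:R)) ?ltr_nat //.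
  by rewrite ler_piMl.
exists (Ordinal tm) => /=; split.
  apply/andP; split; first by rewrite divr_ge0.
  rewrite ler_pdivrMr ?ltr0Sn // mul1r.
  by rewrite (le_trans t1) // ler_piMl.
have hm : 0 < m.+1%:R :> R by rewrite ltr0Sn.
have f1 : t%:R / m.+1%:R <= x by rewrite ler_pdivrMr.
have f2 : x <= t%:R / m.+1%:R + m.+1%:R^-1.
  by rewrite -[X in _ + X]mul1r -mulrDl ler_pdivlMr // natr1 ltW.
have f3 : 0 <= m.+1%:R^-1 :> R by rewrite invr_ge0 ltW.
move: f1 f2 f3; move: (t%:R / m.+1%:R) => a; move: (m.+1%:R^-1) => b f1 f2 f3.
rewrite ler_norml; apply/andP; split; lra.
Qed.

End RealAux.

Section DistAux.
Context {R : realType} {K : nat}.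
Implicit Types (W : set 'rV[R]_K) (v u : 'rV[R]_K).

Lemma eucl_normE v u : eucl_norm (v - u) =
  Num.sqrt (\sum_(k < K) (v ord0 k - u ord0 k) ^+ 2).
Proof. by rewrite /eucl_norm; congr Num.sqrt; apply: eq_bigr => k _; rewrite !mxE. Qed.

Lemma dist_ne0 W v : W !=set0 ->
  [set eucl_norm (v - w) | w in W] !=set0.
Proof. by move=> [w Ww]; exists (eucl_norm (v - w)); exists w. Qed.

Lemma dist_lb W v : lbound [set eucl_norm (v - w) | w in W] 0.
Proof. by move=> _ [w _ <-]; rewrite /eucl_norm sqrtr_ge0. Qed.

Lemma dist_ge0 W v : W !=set0 -> 0 <= dist_set W v.
Proof. by move=> W0; apply: lb_le_inf; [exact: dist_ne0|exact: dist_lb]. Qed.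

Lemma dist_geP W v (eps : R) : W !=set0 -> 0 < eps ->
  (eps <= dist_set W v) <->
  (forall u, W u -> eps ^+ 2 <= \sum_(k < K) (v ord0 k - u ord0 k) ^+ 2).
Proof.
move=> W0 e0; split.
  move=> h u Wu.
  have : eps <= eucl_norm (v - u).
    apply: (le_trans h); apply: ge_inf; last by exists u.
    by exists 0; exact: dist_lb.
  rewrite eucl_normE => h2.
  have s0 : 0 <= \sum_(k < K) (v ord0 k - u ord0 k) ^+ 2.
    by apply: sumr_ge0 => k _; exact: sqr_ge0.
  rewrite -(sqr_sqrtr s0); rewrite ler_pXn2r // ?nnegrE ?sqrtr_ge0 // ltW //.
move=> h; apply: lb_le_inf; first exact: dist_ne0.
move=> _ [u Wu <-]; rewrite eucl_normE.
rewrite -(@ger0_norm _ eps); last exact: ltW.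
rewrite -sqrtr_sqr; apply: ler_wsqrtr; exact: h.
Qed.

Lemma dist_lt W v (eps : R) : W !=set0 -> dist_set W v < eps ->
  exists2 u, W u & forall k, `|v ord0 k - u ord0 k| < eps.
Proof.
move=> W0 /(inf_lt (@dist_ne0 W v W0)) [_ [u Wu <-]] h; exists u => // k.
apply: le_lt_trans h; rewrite eucl_normE -sqrtr_sqr; apply: ler_wsqrtr.
rewrite (bigD1 k) //= lerDl; apply: sumr_ge0 => i _; exact: sqr_ge0.
Qed.

End DistAux.

Section Meas.
Context {R : realType} {K : nat} (d : measure_display) (Omega : measurableType d).
Variable (W : set 'rV[R]_K) (W0 : W !=set0) (Wsub : W `<=` simplex (R:=R) (K:=K)).
Variable (f : 'I_K -> Omega -> R) (mf : forall k, measurable_fun setT (f k))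
  (f01 : forall k w, 0 <= f k w <= 1).
Variable (eps : R) (eps0 : 0 < eps).

Lemma simplex01 (u : 'rV[R]_K) k : simplex u -> 0 <= u ord0 k <= 1.
Proof.
move=> [u0 u1]; rewrite u0 /= -u1 (bigD1 k) //= lerDl.
by apply: sumr_ge0 => i _; exact: u0.
Qed.

Lemma grid01 m (j : 'I_(m.+2)) : 0 <= ((j : nat)%:R / m.+1%:R : R) <= 1.
Proof.
apply/andP; split; first by rewrite divr_ge0.
by rewrite ler_pdivrMr ?ltr0Sn // mul1r ler_nat -ltnS ltn_ord.
Qed.

Definition rr (m : nat) : R := m.+1%:R^-1.
Definition qq {m} (j : {ffun 'I_K -> 'I_(m.+2)}) k : R := (j k : nat)%:R / m.+1%:R.
Definition Good m (j : {ffun 'I_K -> 'I_(m.+2)}) := forall u, W u ->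
  eps ^+ 2 - (2 * rr m) *+ K <= \sum_(k < K) (qq j k - u ord0 k) ^+ 2.
Definition Tset {m} (j : {ffun 'I_K -> 'I_(m.+2)}) :=
  \bigcap_(k in [set: 'I_K]) [set w | `|f k w - qq j k| <= rr m].

Lemma dist_geP_fun (a : 'I_K -> R) :
  (eps <= dist_set W (\row_k a k)) <->
  (forall u, W u -> eps ^+ 2 <= \sum_(k < K) (a k - u ord0 k) ^+ 2).
Proof.
have E u : \sum_(k < K) ((\row_k a k) ord0 k - u ord0 k) ^+ 2 =
    \sum_(k < K) (a k - u ord0 k) ^+ 2 by apply: eq_bigr => k _; rewrite mxE.
by rewrite dist_geP //; split => h u Wu; have := h u Wu; rewrite E.
Qed.

Lemma Sset_eq : [set w | eps <= `|dist_set W (\row_k f k w)|] =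
  \bigcap_(m in [set: nat]) \bigcup_(j in Good m) Tset j.
Proof.
apply/seteqP; split => w /=.
  rewrite ger0_norm; last exact: dist_ge0.
  move/dist_geP_fun => H m _.
  have /fin_all_exists [g Hg] := fun k => @grid_pt R (f k w) m (f01 k w).
  set j := [ffun k => g k].
  have qqj k : qq j k = (g k : nat)%:R / m.+1%:R by rewrite /qq ffunE.
  exists j.
    move=> u Wu; have H1 := H u Wu.
    have hb : \sum_(k < K) (f k w - u ord0 k) ^+ 2 <=
        \sum_(k < K) (qq j k - u ord0 k) ^+ 2 + (2 * rr m) *+ K.
      apply: (@sum_bound R K (qq j) (fun k => f k w) (fun k => u ord0 k) (rr m)).
    - by move=> k; rewrite qqj; have [] := Hg k.
    - by [].
    - by move=> k; apply: simplex01; exact: Wsub.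
    - by move=> k; rewrite qqj distrC; have [] := Hg k.
    lra.
  by move=> k _ /=; rewrite qqj; have [] := Hg k.
move=> h; rewrite (le_trans _ (ler_norm _)) //.
apply/dist_geP_fun => u Wu.
apply: (@le_from_nat R _ _ ((4 : R) *+ K)); first by rewrite mulrn_wge0.
move=> m; have [//|j Gj Tj] := h m.
have h2 := Gj u Wu.
have hb : \sum_(k < K) (qq j k - u ord0 k) ^+ 2 <=
    \sum_(k < K) (f k w - u ord0 k) ^+ 2 + (2 * rr m) *+ K.
  apply: (@sum_bound R K (fun k => f k w) (qq j) (fun k => u ord0 k) (rr m)).
  - by [].
  - by move=> k; exact: grid01.
  - by move=> k; apply: simplex01; exact: Wsub.
  - by move=> k; exact: (Tj k).
have -> : (4 : R) *+ K / m.+1%:R = (2 * rr m) *+ K + (2 * rr m) *+ K.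
  rewrite /rr -mulrnDl -mulrDl -mulrnAl; congr (_ *+ _ * _).
  by rewrite -natrD.
move: h2 hb; move: (2 * rr m *+ K) => X; lra.
Qed.

Lemma Sset_meas : measurable [set w | eps <= `|dist_set W (\row_k f k w)|].
Proof.
rewrite Sset_eq; apply: bigcap_measurableType => m _.
apply: fin_bigcup_measurable; first exact: finite_finset.
move=> j _; apply: fin_bigcap_measurable; first exact: finite_finset.
move=> k _.
have mg : measurable_fun setT (fun w => `|f k w - qq j k|).
  apply: measurableT_comp => //; apply: measurable_funB => //; exact: measurable_cst.
have -> : [set w | `|f k w - qq j k| <= rr m] =
    (fun w => `|f k w - qq j k|) @^-1` `]-oo, rr m].
  by apply/seteqP; split => x /=; rewrite in_itv.
by rewrite -[X in measurable X]setTI; apply: mg => //; exact: measurable_itv.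
Qed.

End Meas.

Section EAux.
Context {R : realType}.
Local Open Scope ereal_scope.
Implicit Types (u : (\bar R)^nat).

Lemma esup_lt_ev u x : limn_esup u < x ->
  exists N, forall m, (N <= m)%N -> u m <= x.
Proof.
move=> h.
have L : limn_esup u = ereal_inf (range (esups u)).
  rewrite limn_esup_lim; apply/cvg_lim => //; exact: cvg_esups_inf.
rewrite L in h; have [_ [N _ <-] hN] := ereal_inf_lt h.
exists N => m Nm; apply: le_trans (ltW hN); apply: ereal_sup_ubound.
by exists m.
Qed.

Lemma einf_ge_ev u y : (exists N, forall m, (N <= m)%N -> y <= u m) ->
  y <= limn_einf u.
Proof.
move=> [N hN]; rewrite limn_einf_lim; apply: lime_ge; first exact: is_cvg_einfs.
near=> n; apply: le_ereal_inf_tmp => _ [m /= nm <-]; apply: hN.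
by apply: leq_trans nm; near: n; exists N.
Unshelve. all: by end_near. Qed.

End EAux.

Theorem theorem3
  (R : realType) (K p : nat) (hK : (2 <= K)%N) (alpha : R)
  (halpha : 0 < alpha < 1)
  (d : measure_display) (Omega : measurableType d) (P : probability Omega R)
  (dD : measure_display) (TD : nat -> measurableType dD)
  (Dn : forall n, Omega -> TD n)
  (mDn : forall n, measurable_fun setT (Dn n))
  (Xsp : set 'rV[R]_p)
  (X : Omega -> 'rV[R]_p) (hX : forall w, Xsp (X w))
  (Y : Omega -> R)
  (C : forall n, 'I_K -> TD n -> 'rV[R]_p -> set R)
  (mC : forall n k, measurable [set w | C n k (Dn n w) (X w) (Y w)])
  (what : forall n, 'I_K -> TD n -> R)
  (mwhat : forall n k, measurable_fun setT (what n k))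
  (hwhat : forall n t, simplex (\row_k what n k t))
  (Wstar : set 'rV[R]_K)
  (hW0 : Wstar !=set0) (hWsub : Wstar `<=` simplex (R:=R) (K:=K))
  (hWcl : closed Wstar) (hWcv : convex_rV Wstar)
  (* A1' *)
  (hA1 : exists pr : forall n, 'I_K -> TD n -> R,
     (forall n k, cond_prob_version P (Dn n)
        [set w | ~ C n k (Dn n w) (X w) (Y w)] (pr n k)) /\
     cvg_prob0 P (fun n w =>
        \big[Num.max/0]_(k < K) `|pr n k (Dn n w) - alpha|))
  (* A2 *)
  (hA2 : cvg_prob0 P (fun n w => dist_set Wstar (\row_k what n k (Dn n w))))
  (Kstar : {set 'I_K}) (delta : R) (hdelta : 0 < delta)
  (hKstar : forall v, Wstar v -> 1 / 2 + delta <= \sum_(k in Kstar) v ord0 k)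
  (hlimsup : (limn_esup (fun n =>
      P [set w | exists2 k, k \in Kstar & ~ C n k (Dn n w) (X w) (Y w)])
      <= alpha%:E)%E) :
  ((1 - alpha)%:E <= limn_einf (fun n =>
      P [set w | C_comb (\row_k what n k (Dn n w)) (fun k => C n k (Dn n w) (X w)) (Y w)]))%E.
Proof.
have K0 : (0 < K%:R :> R) by rewrite ltr0n (leq_trans _ hK).
pose eps := delta / (K%:R + 1).
have eps0 : 0 < eps by rewrite divr_gt0 // addr_gt0.
have epsK : eps *+ K < delta.
  rewrite -mulr_natr /eps mulrAC ltr_pdivrMr ?addr_gt0 //.
  by rewrite mulrDr mulr1 ltrDl.
pose M n k := [set w | C n k (Dn n w) (X w) (Y w)].
pose U n := [set w | exists2 k, k \in Kstar & ~ C n k (Dn n w) (X w) (Y w)].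
pose S n := [set w | eps <= `|dist_set Wstar (\row_k what n k (Dn n w))|].
pose Cb n := [set w | C_comb (\row_k what n k (Dn n w))
    (fun k => C n k (Dn n w) (X w)) (Y w)].
have mf n k : measurable_fun setT (fun w => what n k (Dn n w)).
  exact: measurableT_comp (mwhat n k) (mDn n).
have f01 n k w : 0 <= what n k (Dn n w) <= 1.
  by have := simplex01 _ k (hwhat n (Dn n w)); rewrite mxE.
have mU n : measurable (U n).
  have -> : U n = \bigcup_(k in [set k | k \in Kstar]) ~` M n k.
    by apply/seteqP; split => w /= [k kK h]; exists k.
  apply: fin_bigcup_measurable; first exact: finite_finset.
  by move=> k _; apply: measurableC; exact: mC.
have mS n : measurable (S n).
  exact: (@Sset_meas R K d Omega Wstar hW0 hWsub _ (mf n) (f01 n) eps eps0).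
have mCb n : measurable (Cb n).
  pose g w := \sum_(k < K) what n k (Dn n w) * \1_(M n k) w.
  have E w : \sum_(k < K) (\row_k0 what n k0 (Dn n w)) ord0 k *
        \1_(C n k (Dn n w) (X w)) (Y w) = g w.
    apply: eq_bigr => k _; rewrite mxE !indicE; congr (_ * _%:R).
  have -> : Cb n = g @^-1` `]2^-1, +oo[.
    apply/seteqP; split => w; rewrite /Cb /C_comb /preimage /mkset;
      by rewrite E in_itv /= andbT div1r.
  have mg : measurable_fun setT g.
    apply: measurable_sum => k; apply: measurable_funM => //.
    exact/measurable_indic/mC.
  rewrite -[X in measurable X]setTI; apply: mg => //; exact: measurable_itv.
have incl n : ~` Cb n `<=` U n `|` S n.
  move=> w nC; apply: contrapT => nUS; apply: nC.
  have nU : ~ U n w by move=> h; apply: nUS; left.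
  have nS : ~ S n w by move=> h; apply: nUS; right.
  have hC k : k \in Kstar -> C n k (Dn n w) (X w) (Y w).
    by move=> kK; apply: contrapT => h; apply: nU; exists k.
  have dlt : dist_set Wstar (\row_k what n k (Dn n w)) < eps.
    rewrite ltNge; apply/negP => h; apply: nS.
    by rewrite /S /mkset ger0_norm // (dist_ge0 _ _ hW0).
  have [u Wu hu] := @dist_lt _ _ Wstar _ eps hW0 dlt.
  have h1 := hKstar u Wu.
  have cK : eps *+ #|Kstar| <= eps *+ K.
    rewrite -(mulr_natl eps #|Kstar|) -(mulr_natl eps K).
    apply: ler_wpM2r; first exact: ltW.
    by rewrite ler_nat; have := max_card Kstar; rewrite card_ord.
  have h2 : \sum_(k in Kstar) u ord0 k - eps *+ #|Kstar| <=
      \sum_(k in Kstar) what n k (Dn n w).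
    rewrite -sumr_const -sumrB; apply: ler_sum => k _.
    have := hu k; rewrite mxE => /ltW; rewrite ler_norml => /andP[]; move: (u ord0 k) (what n k (Dn n w)) => a b; lra.
  rewrite /Cb /C_comb /mkset.
  apply: (@lt_le_trans _ _ (\sum_(k in Kstar) what n k (Dn n w))); first by move: h1 h2 cK epsK; move: (\sum_(k in Kstar) _) (\sum_(k in Kstar) _) (eps *+ _) (eps *+ K) => a b c e; lra.
  rewrite [X in _ <= X](bigID (fun k => k \in Kstar)) /= -[X in X <= _]addr0.
  apply: lerD.
    apply: ler_sum => k kK; rewrite mxE indicE mem_set ?mulr1 //; exact: hC.
  apply: sumr_ge0 => k _; rewrite mxE; apply: mulr_ge0.
    by have /andP[] := f01 n k w.
  by rewrite indicE.
have hP n : (P (~` Cb n) <= P (U n) + P (S n))%E.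
  apply: le_trans (measureU2 P (mU n) (mS n)).
  apply: le_measure; last exact: incl.
  - by rewrite inE; exact: measurableC.
  - by rewrite inE; exact: measurableU.
have hCb n : P (Cb n) = (1 - P (~` Cb n))%E.
  by rewrite -probability_setC ?setCK //; exact: measurableC.
apply/lee_subgt0Pr => e e0.
have e2 : 0 < e / 2 by rewrite divr_gt0.
have aL : (alpha%:E < (alpha + e / 2)%:E)%E by rewrite lte_fin ltrDl.
have [N1 hN1] := esup_lt_ev _ _ (le_lt_trans hlimsup aL).
have lS : limn_esup (fun n => P (S n)) = 0%E.
  exact: (cvg_limn_einf_sup (hA2 eps eps0)).2.
have [N2 hN2] : exists N, forall m, (N <= m)%N -> (P (S m) <= (e / 2)%:E)%E.
  by apply: esup_lt_ev; rewrite lS lte_fin.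
apply: einf_ge_ev; exists (maxn N1 N2) => m hm.
have hu := hN1 m (leq_trans (leq_maxl _ _) hm).
have hs := hN2 m (leq_trans (leq_maxr _ _) hm).
have fin : P (~` Cb m) = (fine (P (~` Cb m)))%:E.
  rewrite fineK // ge0_fin_numE ?measure_ge0 //.
  by rewrite (le_lt_trans (probability_le1 P (measurableC (mCb m)))) ?ltey.
have := le_trans (hP m) (leeD hu hs).
change (P [set w | C_comb (\row_k what m k (Dn m w))
    (fun k => C m k (Dn m w) (X w)) (Y w)]) with (P (Cb m)).
rewrite hCb fin; move: (fine _) => z.
rewrite -EFinD lee_fin -EFinB -!EFinB lee_fin => hz; lra.
Qed.
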